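(* Let $(L,\vee,\wedge,0,1)$ be a complemented lattice with $0\ne1$ and $a\in L$. Then the following are equivalent: (i) for all $x\in L$: $a\to x=\{1\}$ if and only if $a\le x$; (ii) $a$ is a minimal element of $a^{++}$.
   Context: For $a\in L$, $a^+:=\{x\in L\mid a\vee x=1,\ a\wedge x=0\}$ (the set of all complements of $a$); for $A\subseteq L$, $A^+:=\{x\in L\mid a\vee x=1\text{ and }a\wedge x=0\text{ for all }a\in A\}$, and $a^{++}:=(a^+)^+$. For $a,b\in L$, $a\to b:=\{x\vee(a\wedge b)\mid x\in a^+\}$. *)

(* Defs.v *)
From mathcomp Require Import all_boot all_order.
Set Implicit Arguments. Unset Strict Implicit. Unset Printing Implicit Defensive.
Import Order.TTheory.
Local Open Scope order_scope.

(* Bounded lattice L (0 = \bot, 1 = \top); subsets of L are predicates L -> Prop. *)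
Section Defs.
Context {disp : Order.disp_t} {L : tbLatticeType disp}.

Definition complemented : Prop :=
  forall a : L, exists b : L, a `|` b = \top /\ a `&` b = \bot.

Definition compl_set (a : L) : L -> Prop :=
  fun x => a `|` x = \top /\ a `&` x = \bot.

Definition compl_setS (A : L -> Prop) : L -> Prop :=
  fun x => forall a, A a -> a `|` x = \top /\ a `&` x = \bot.

Definition compl2 (a : L) : L -> Prop := compl_setS (compl_set a).

Definition arrow (a b : L) : L -> Prop :=
  fun y => exists2 x, compl_set a x & y = x `|` (a `&` b).

Definition is_top_singleton (A : L -> Prop) : Prop :=
  forall y, A y <-> y = \top.

Definition minimal_in (A : L -> Prop) (a : L) : Prop :=
  A a /\ forall y, A y -> y <= a -> y = a.
End Defs.

(* Main.v *)
Require Import Defs.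
From mathcomp Require Import all_boot all_order.
Import Order.TTheory.
Local Open Scope order_scope.

Theorem proposition4 (disp : Order.disp_t) (L : tbLatticeType disp)
  (hC : @complemented disp L) (h01 : (\bot : L) <> \top) (a : L) :
  (forall x : L, is_top_singleton (arrow a x) <-> a <= x) <->
  minimal_in (compl2 a) a.
Proof.
split.
- move=> Hi; split.
    by move=> c [h1 h2]; rewrite joinC meetC.
  move=> y Hy ya; apply/le_anti; rewrite ya /=; apply/(Hi y) => z; split.
    by case=> c hc ->; rewrite meetC (meet_idPl ya); case: (Hy c hc).
  move=> ->; case: (hC a) => c hc; exists c => //.
  by rewrite meetC (meet_idPl ya); case: (Hy c hc).
- case=> Ha Hmin x; split.
    move=> H.
    have Hy : compl2 a (a `&` x).
      move=> c hc; split.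
        by apply/(H _).1; exists c.
      by rewrite meetA (meetC c a) hc.2 meet0x.
    have E := Hmin _ Hy (leIl a x).
    by rewrite -E leIr.
  move=> ax z; split.
    by case=> c hc ->; rewrite (meet_idPl ax) joinC hc.1.
  move=> ->; case: (hC a) => c hc; exists c => //.
  by rewrite (meet_idPl ax) joinC hc.1.
Qed.
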